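(* Let $X$ be a real Banach space with $\dim X \ge 2$. Then $0 \le S_P(X) \le \tfrac12$.
   Context: For a real Banach space $X$ with unit sphere $S_X=\{x:\|x\|=1\}$, the P-angle between nonzero vectors $u,v$ is $\operatorname{ang}_P(u,v)=\arccos\frac{\|u\|^2+\|v\|^2-\|u-v\|^2}{2\|u\|\|v\|}$. The P-angle constant is $S_P(X)=\sup\{\cos\operatorname{ang}_P(x+y,x-y): x,y\in S_X,\ x\neq \pm y\}$; explicitly, $\cos\operatorname{ang}_P(x+y,x-y)=\frac{\|x+y\|^2+\|x-y\|^2-4}{2\|x+y\|\,\|x-y\|}$ for $x,y\in S_X$, $x\ne\pm y$. *)

(* Defs.v *)
From HB Require Import structures.
From mathcomp Require Import all_boot all_order all_algebra.
From mathcomp Require Import all_classical all_reals all_analysis.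
Set Implicit Arguments. Unset Strict Implicit. Unset Printing Implicit Defensive.
Import Order.TTheory GRing.Theory Num.Theory.
Import numFieldNormedType.Exports.
Local Open Scope classical_set_scope.
Local Open Scope ring_scope.

(* cos of the P-angle between x+y and x-y, for x y on the unit sphere *)
Definition cosP_pm {R : realType} {X : normedModType R} (x y : X) : R :=
  (`|x + y| ^+ 2 + `|x - y| ^+ 2 - 4) / (2 * `|x + y| * `|x - y|).

Definition S_P {R : realType} (X : normedModType R) : \bar R :=
  ereal_sup [set r : \bar R | exists x y : X,
     [/\ `|x| = 1, `|y| = 1, x != y, x != - y & r = (cosP_pm x y)%:E]].

Definition dim_ge2 {R : realType} (X : normedModType R) : Prop :=
  exists x y : X, forall a b : R, a *: x + b *: y = 0 -> a = 0 /\ b = 0.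

(* Main.v *)
Require Import Defs.
From HB Require Import structures.
From mathcomp Require Import all_boot all_order all_algebra.
From mathcomp Require Import all_classical all_reals all_analysis.
From mathcomp Require Import lra ring.
Import Order.TTheory GRing.Theory Num.Theory.
Import numFieldNormedType.Exports.
Local Open Scope ring_scope.
Local Open Scope classical_set_scope.

Section S.
Variables (R : realType) (X : normedModType R).
Lemma c1 (s : R) : (fun u : R => 1 - 2 * u) @ s --> 1 - 2 * s.
Proof. apply: cvgB; first exact: cvg_cst. apply: cvgMr. exact: cvg_id. Qed.
Lemma c2 (s : R) : (fun u : R => 4 * u * (1 - u)) @ s --> 4 * s * (1 - s).
Proof. apply: cvgM; first by apply: cvgMr; exact: cvg_id. apply: cvgB; [exact: cvg_cst| exact: cvg_id]. Qed.

Lemma w_neq0 (x z : X) (t : R) :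
  (forall a b : R, a *: x + b *: z = 0 -> a = 0 /\ b = 0) ->
  (1 - 2 * t) *: x + (4 * t * (1 - t)) *: z != 0.
Proof.
move=> ind; apply/eqP => /ind [h1 h2].
have ht : t = 2^-1 by apply/eqP; rewrite -subr_eq0; apply/eqP; nra.
move: h2; rewrite ht; nra.
Qed.

Definition wf (x z : X) (t : R) := (1 - 2 * t) *: x + (4 * t * (1 - t)) *: z.
Definition Ff (x z : X) (t : R) :=
  `|x + `|wf x z t|^-1 *: wf x z t| - `|x - `|wf x z t|^-1 *: wf x z t|.

Lemma F_cont (x z : X) :
  (forall a b : R, a *: x + b *: z = 0 -> a = 0 /\ b = 0) ->
  continuous (Ff x z).
Proof.
move=> ind t.
have wc : continuous (wf x z).
  move=> s; apply: cvgD; apply: cvgZ; (exact: c1 || exact: c2 || exact: cvg_cst).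
have nc : (fun s : R => `|wf x z s|^-1) @ t --> `|wf x z t|^-1.
  apply: cvgV; first by rewrite normr_eq0 w_neq0.
  exact: (cvg_comp _ _ (wc t) (@norm_continuous _ _ _)).
have h1 : (fun s => `|wf x z s|^-1 *: wf x z s) @ t --> `|wf x z t|^-1 *: wf x z t.
  exact: cvgZ nc (wc t).
rewrite /Ff; apply: cvgB.
  exact: (cvg_comp _ _ (cvgD (cvg_cst x) h1) (@norm_continuous _ _ _)).
exact: (cvg_comp _ _ (cvgB (cvg_cst x) h1) (@norm_continuous _ _ _)).
Qed.

Lemma cos_nonneg (a : R) : 0 < a -> 2 <= a ^+ 2 -> 0 <= (a ^+ 2 + a ^+ 2 - 4) / (2 * a * a).
Proof. move=> a0 ha; apply: divr_ge0; nra. Qed.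

Lemma lower_pair (x y : X) : `|x| = 1 -> `|y| = 1 -> `|x + y| = `|x - y| ->
  exists u v : X, [/\ `|u| = 1, `|v| = 1, u != v, u != - v & 0 <= cosP_pm u v].
Proof.
move=> nx ny e.
set a := `|x + y|.
have ea : a = `|x + y| by [].
clearbody a.
have a1 : 1 <= a.
  have : `|(x + y) + (x - y)| <= a + `|x - y| by rewrite ea; exact: ler_normD.
  have -> : (x + y) + (x - y) = x *+ 2 by rewrite addrACA subrr addr0 mulr2n.
  rewrite -e normrMn nx mulr2n; lra.
have a0 : 0 < a by lra.
have [ha|ha] := lerP 2 (a ^+ 2).
  exists x, y; split => //.
  - apply/eqP => xy; move: e; rewrite -ea xy subrr normr0; lra.
  - apply/eqP => xy; move: ea; rewrite xy addNr normr0; lra.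
  by rewrite /cosP_pm -e -ea; exact: cos_nonneg.
have ai : a^-1 * a = 1 by rewrite mulVf // gt_eqF.
have nu : `|a^-1 *: (x + y)| = 1 by rewrite normrZ gtr0_norm ?invr_gt0 // -ea ai.
have nv : `|a^-1 *: (x - y)| = 1 by rewrite normrZ gtr0_norm ?invr_gt0 // -e -ea ai.
have spl : a^-1 *: (x + y) + a^-1 *: (x - y) = a^-1 *: (x *+ 2).
  by rewrite -scalerDr addrACA subrr addr0 mulr2n.
have smi : a^-1 *: (x + y) - a^-1 *: (x - y) = a^-1 *: (y *+ 2).
  by rewrite -scalerBr opprB addrC addrA subrK mulr2n.
have n2 : forall w : X, `|w| = 1 -> `|a^-1 *: (w *+ 2)| = 2 * a^-1.
  by move=> w nw; rewrite normrZ normrMn nw gtr0_norm ?invr_gt0 // mulrC.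
have b0 : 0 < 2 * a^-1 by rewrite mulr_gt0 // invr_gt0.
exists (a^-1 *: (x + y)), (a^-1 *: (x - y)); split => //.
- apply/eqP => E; move: (n2 y ny); rewrite -smi E subrr normr0; lra.
- apply/eqP => E; move: (n2 x nx); rewrite -spl E addNr normr0; lra.
- rewrite /cosP_pm spl smi !n2 //; apply: cos_nonneg => //.
  have : (2 * a^-1) * a = 2 by rewrite -mulrA ai mulr1.
  nra.
Qed.

Lemma iso_exists (x z : X) : `|x| = 1 ->
  (forall a b : R, a *: x + b *: z = 0 -> a = 0 /\ b = 0) ->
  exists y : X, `|y| = 1 /\ `|x + y| = `|x - y|.
Proof.
move=> nx ind.
have x2 : `|x + x| = 2 by rewrite -mulr2n normrMn nx.
have F0 : Ff x z 0 = 2.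
  rewrite /Ff /wf mulr0 subr0 mulr0 mul0r scale1r scale0r addr0 nx invr1 scale1r.
  by rewrite subrr normr0 subr0 x2.
have F1 : Ff x z 1 = -2.
  rewrite /Ff /wf mulr1 subrr mulr0 scale0r addr0.
  have -> : (1 - 2 : R) = -1 by lra.
  rewrite scaleN1r normrN nx invr1 scale1r subrr opprK normr0 x2; lra.
have [c _ Fc] : exists2 c, c \in `[0, 1]%R & Ff x z c = 0.
  apply: IVT => //; first by apply: continuous_subspaceT; exact: F_cont.
  rewrite F0 F1; apply/andP; split.
  - by rewrite ge_min; apply/orP; right; lra.
  - by rewrite le_max; apply/orP; left; lra.
exists (`|wf x z c|^-1 *: wf x z c); split.
  rewrite normrZ ger0_norm ?invr_ge0 // mulVf // normr_eq0; exact: w_neq0.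
by apply/eqP; rewrite -subr_eq0; apply/eqP.
Qed.

Lemma upper_pair (x y : X) : `|x| = 1 -> `|y| = 1 -> x != y -> x != - y ->
  cosP_pm x y <= 1 / 2.
Proof.
move=> nx ny xy xny.
have a2 : `|x + y| <= 2 by have := ler_normD x y; rewrite nx ny; lra.
have b2 : `|x - y| <= 2 by have := ler_normB x y; rewrite nx ny; lra.
have a0 : 0 < `|x + y| by rewrite normr_gt0 addr_eq0.
have b0 : 0 < `|x - y| by rewrite normr_gt0 subr_eq0.
rewrite /cosP_pm ler_pdivrMr ?mulr_gt0 //.
set a := `|x + y| in a2 a0 *; set b := `|x - y| in b2 b0 *.
nra.
Qed.
End S.

Local Open Scope ereal_scope.

Theorem proposition3p3 (R : realType) (X : completeNormedModType R) :
  dim_ge2 X -> 0%E <= S_P X /\ S_P X <= (1 / 2 : R)%:E.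
Proof.
move=> [x0 [z ind]].
have x00 : (x0 != 0)%R.
  apply/eqP => e; have [] := ind 1%R 0%R; first by rewrite e scaler0 scale0r addr0.
  by move/eqP; rewrite oner_eq0.
have nx0 : (0 < `|x0|)%R by rewrite normr_gt0.
pose x := (`|x0|^-1 *: x0)%R.
have nx : (`|x| = 1)%R by rewrite normrZ ger0_norm ?invr_ge0 // mulVf // gt_eqF.
have indx : forall a b : R, (a *: x + b *: z = 0)%R -> a = 0%R /\ b = 0%R.
  move=> a b; rewrite /x scalerA => /ind [h1 ->]; split => //.
  move/eqP: h1; rewrite mulf_eq0 invr_eq0 (gt_eqF nx0) orbF => /eqP //.
have [y [ny e]] := @iso_exists _ _ x z nx indx.
have [u [v [nu nv uv unv c0]]] := @lower_pair _ _ x y nx ny e.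
split.
  apply: le_ereal_sup_tmp; exists (cosP_pm u v)%:E; last by rewrite lee_fin.
  by exists u, v; split.
apply: ge_ereal_sup => r [x1 [y1 [n1 n2 h1 h2 ->]]].
rewrite lee_fin; exact: (@upper_pair _ X).
Qed.
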